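(* Let $G=(K\cup I,E)$ be a split graph and let $(V,\mathcal{F})$ be the split graph vertex shelling antimatroid defined on $G$. Then a subset $F\subseteq V$ is feasible (i.e. $F\in\mathcal{F}$) if and only if $N(F)$ induces a clique in $G$.
   Context: A split graph $G=(K\cup I,E)$ is a finite simple graph whose vertex set $V=K\cup I$ comes with a fixed partition into a clique $K$ and an independent set $I$ (either may be empty). We write $u\sim v$ if $u,v$ are adjacent. For $F\subseteq V$, $N(F)$ denotes the set of vertices $w\in V\setminus F$ adjacent to at least one vertex of $F$, and $N(v)=N(\{v\})$. A vertex is simplicial in a graph if its neighbours induce a clique. The split graph vertex shelling antimatroid of $G$ is the set system $(V,\mathcal{F})$ in which $F\subseteq V$ is feasible iff there is an ordering $f_1,\dots,f_{|F|}$ of $F$ such that for every $j$, $f_j$ is simplicial in the graph obtained from $G$ by deleting $f_1,\dots,f_{j-1}$ (the empty set is feasible). The empty vertex set counts as a clique. *)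

(* Defs.v *)
From mathcomp Require Import all_boot.
Set Implicit Arguments. Unset Strict Implicit. Unset Printing Implicit Defensive.

Definition simple_graph (T : finType) (e : rel T) : Prop :=
  symmetric e /\ irreflexive e.

Definition is_clique (T : finType) (e : rel T) (S : {set T}) : Prop :=
  forall u v, u \in S -> v \in S -> u != v -> e u v.

Definition is_independent (T : finType) (e : rel T) (S : {set T}) : Prop :=
  forall u v, u \in S -> v \in S -> ~~ e u v.

(* Split graph with fixed partition V = K ∪ I (I is the complement of K). *)
Definition split_graph (T : finType) (e : rel T) (K : {set T}) : Prop :=
  [/\ simple_graph e, is_clique e K & is_independent e (~: K)].

Definition nbhd (T : finType) (e : rel T) (F : {set T}) : {set T} :=
  [set w | (w \notin F) && [exists f in F, e f w]].

(* v is simplicial in the graph G - D (induced subgraph on ~: D), v \notin D: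
   its neighbours in G - D induce a clique. *)
Definition simplicial_in (T : finType) (e : rel T) (D : {set T}) (v : T) : Prop :=
  is_clique e [set w | (w \notin D) && e v w].

Fixpoint shelling_seq (T : finType) (e : rel T) (D : {set T}) (s : seq T) : Prop :=
  match s with
  | [::] => True
  | v :: s' => v \notin D /\ simplicial_in e D v /\ shelling_seq e (v |: D) s'
  end.

Definition feasible (T : finType) (e : rel T) (F : {set T}) : Prop :=
  exists s : seq T, [/\ uniq s, [set x in s] = F & shelling_seq e set0 s].

(* Main.v *)
Require Import Defs.
From mathcomp Require Import all_boot.
Set Implicit Arguments. Unset Strict Implicit.

Lemma setin_cons (T : finType) (x : T) (s : seq T) :
  [set y in x :: s] = x |: [set y in s].
Proof. by apply/setP => y; rewrite !inE. Qed.

Lemma setin_rcons (T : finType) (x : T) (s : seq T) :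
  [set y in rcons s x] = x |: [set y in s].
Proof. by apply/setP => y; rewrite !inE mem_rcons inE. Qed.

Lemma shelling_rcons (T : finType) (e : rel T) (s : seq T) (D : {set T}) v :
  shelling_seq e D (rcons s v) <->
  [/\ shelling_seq e D s, v \notin D :|: [set x in s] &
      simplicial_in e (D :|: [set x in s]) v].
Proof.
elim: s D => [|x s IH] D /=.
  have -> : D :|: [set x in [::]] = D by apply/setP => y; rewrite !inE orbF.
  by split; [case=> a [b _]; split | case=> _ a b; split].
have E : D :|: [set y in x :: s] = (x |: D) :|: [set y in s].
  by rewrite setin_cons setUCA setUA.
rewrite E; split.
  by case=> a [b /IH [c d f]]; split.
by case=> [[a [b c]] d f]; split=> //; split=> //; apply/IH.
Qed.

Lemma step (T : finType) (e : rel T) (K : {set T}) (hG : split_graph e K)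
  (F : {set T}) v :
  v \notin F -> simplicial_in e F v -> is_clique e (nbhd e F) ->
  is_clique e (nbhd e (v |: F)).
Proof.
case: hG => [[sym irr] cK iK] vF sv cN.
have mixed : forall a b, a \in nbhd e F -> b \notin F -> b != v -> e v b ->
   a != b -> a != v -> e a b.
  move=> a b aN bF bv vb ab av.
  have aN' := aN; rewrite inE in aN'.
  have aF : a \notin F by case/andP: (aN').
  case: (boolP (e v a)) => va.
    by apply: sv; rewrite // !inE ?aF ?bF.
  case: (boolP (b \in nbhd e F)) => bN; first exact: cN.
  case/andP: (aN') => _ /existsP [f /andP [fF fa]].
  case: (boolP (a \in K)) => aK.
    case: (boolP (b \in K)) => bK; first exact: cK.
    case: (boolP (v \in K)) => vK.
      by move: va; rewrite cK // eq_sym.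
    by move: (iK v b); rewrite !inE vK bK vb => /(_ isT isT).
  have fK : f \in K.
    apply/negPn/negP => fK.
    by move: (iK f a); rewrite !inE fK aK fa => /(_ isT isT).
  case: (boolP (v \in K)) => vK.
    have vf : v != f by apply: contraNneq vF => ->.
    have vN : v \in nbhd e F.
      by rewrite inE vF /=; apply/existsP; exists f; rewrite fF sym cK // eq_sym.
    by move: va; rewrite cN // eq_sym.
  have bK : b \in K.
    apply/negPn/negP => bK.
    by move: (iK v b); rewrite !inE vK bK vb => /(_ isT isT).
  have fb : e f b by apply: cK => //; apply: contraNneq bF => <-.
  have : b \in nbhd e F by rewrite inE bF /=; apply/existsP; exists f; rewrite fF fb.
  by rewrite (negbTE bN).
move=> a b; rewrite !inE !negb_or => /andP[/andP[av aF] /existsP[f /andP[fvF fa]]]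
  /andP[/andP[bv bF] /existsP[g /andP[gvF gb]]] ab.
have aN : (e v a = false) -> a \in nbhd e F.
  move=> va; rewrite inE aF /=; apply/existsP; exists f.
  move: fvF; rewrite !inE => /orP[/eqP fv|->]; last by [].
  by move: fa; rewrite fv va.
have bN : (e v b = false) -> b \in nbhd e F.
  move=> vb; rewrite inE bF /=; apply/existsP; exists g.
  move: gvF; rewrite !inE => /orP[/eqP gv|->]; last by [].
  by move: gb; rewrite gv vb.
case: (boolP (e v a)) => va; case: (boolP (e v b)) => vb.
- by apply: sv; rewrite // !inE ?aF ?bF.
- have := mixed b a (bN (negbTE vb)) aF av va; rewrite eq_sym => /(_ ab bv).
  by rewrite sym.
- by apply: mixed (aN (negbTE va)) bF bv vb ab av.
- by apply: cN; [apply: aN; apply: negbTE | apply: bN; apply: negbTE |].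
Qed.

Lemma simpl_auto (T : finType) (e : rel T) (F : {set T}) v :
  v \in F -> irreflexive e -> is_clique e (nbhd e F) ->
  simplicial_in e (F :\ v) v.
Proof.
move=> vF irr cN a b; rewrite !inE => /andP[aF va] /andP[bF vb] ab.
have av : a != v by apply: contraTneq va => ->; rewrite irr.
have bv : b != v by apply: contraTneq vb => ->; rewrite irr.
apply: cN => //; rewrite inE.
- move: aF; rewrite av /= => ->; apply/existsP; exists v; by rewrite vF.
- move: bF; rewrite bv /= => ->; apply/existsP; exists v; by rewrite vF.
Qed.

Lemma remove_ok (T : finType) (e : rel T) (F : {set T}) v :
  symmetric e -> v \in F -> is_clique e (nbhd e F) ->
  ((forall f, f \in F -> ~~ e f v) \/ (forall w, w \in nbhd e F -> e v w)) ->
  is_clique e (nbhd e (F :\ v)).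
Proof.
move=> sym vF cN H.
have sub : forall w, w \in nbhd e (F :\ v) -> w != v -> w \in nbhd e F.
  move=> w; rewrite !inE negb_and negbK => /andP[wF /existsP[f /andP[fF fw]]] wv.
  move: wF; rewrite (negbTE wv) /= => ->; apply/existsP; exists f.
  by move: fF; rewrite !inE => /andP[_ ->].
move=> a b aN bN ab.
case: (eqVneq a v) => [av|av]; case: (eqVneq b v) => [bv|bv].
- by move: ab; rewrite av bv eqxx.
- case: H => H.
    move: aN; rewrite av inE => /andP[_ /existsP[f /andP[]]].
    by rewrite !inE => /andP[_ fF] fv; move: (H f fF); rewrite fv.
  by rewrite av; apply: H; apply: (sub b bN bv).
- case: H => H.
    move: bN; rewrite bv inE => /andP[_ /existsP[f /andP[]]].
    by rewrite !inE => /andP[_ fF] fv; move: (H f fF); rewrite fv.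
  by rewrite bv sym; apply: H; apply: (sub a aN av).
- by apply: cN => //; [apply: (sub a aN av) | apply: (sub b bN bv)].
Qed.

Theorem mainTheorem1 (T : finType) (e : rel T) (K : {set T})
  (hG : split_graph e K) (F : {set T}) :
  feasible e F <-> is_clique e (nbhd e F).
Proof.
have hG' := hG; case: hG' => [[sym irr] cK iK].
split.
  case=> s [_ <- sh]; elim/last_ind: s sh => [|s v IH].
    by move=> _ a b; rewrite inE => /andP[_ /existsP[f]]; rewrite !inE.
  case/shelling_rcons; rewrite set0U => shs vs sv.
  rewrite setin_rcons. apply: (step hG) => //; exact: IH.
move Hn: #|F| => n; elim: n F Hn => [|n IH] F Hn cN.
  move/eqP: Hn; rewrite cards_eq0 => /eqP ->; exists [::]; split => //.
have [v vF H] : exists2 v, v \in F &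
    ((forall f, f \in F -> ~~ e f v) \/ (forall w, w \in nbhd e F -> e v w)).
  have dom : forall f, f \in F -> f \in K ->
      (forall w, w \in nbhd e F -> w \notin K -> e f w) ->
      forall w, w \in nbhd e F -> e f w.
    move=> f fF fK Hw w wN; case: (boolP (w \in K)) => wK; last exact: Hw.
    apply: cK => //; apply: contraTneq wN => <-; rewrite inE fF.
    by [].
  case: (pickP [pred w | (w \in nbhd e F) && (w \notin K)]) => [w0 /andP[w0N w0K]|none].
    have w0N' := w0N; rewrite inE in w0N'.
    case/andP: (w0N') => _ /existsP[f /andP[fF fw0]].
    have fK : f \in K.
      apply/negPn/negP => fK.
      by move: (iK f w0); rewrite !inE fK w0K fw0 => /(_ isT isT).
    exists f => //; right; apply: dom => // w wN wK.
    case: (eqVneq w w0) => [->//|ww0].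
    by move: (iK w w0); rewrite !inE wK w0K (cN w w0) // => /(_ isT isT).
  case: (pickP [pred f | (f \in F) && (f \in K)]) => [f /andP[fF fK]|noneK].
    exists f => //; right; apply: dom => // w wN wK.
    by move: (none w); rewrite /= wN wK.
  have : #|F| != 0 by rewrite Hn.
  rewrite cards_eq0 => /set0Pn [v vF]; exists v => //; left => f fF.
  have nK : forall x, x \in F -> x \notin K.
    by move=> x xF; apply/negP => xK; move: (noneK x); rewrite /= xF xK.
  by move: (iK f v); rewrite !inE !nK // => /(_ isT isT).
have cN' := remove_ok sym vF cN H.
have Hn' : #|F :\ v| = n by move: Hn; rewrite (cardsD1 v F) vF add1n => -[].
case: (IH _ Hn' cN') => s [us ss shs].
exists (rcons s v); split.
- by rewrite rcons_uniq us andbT -(in_set (fun x => x \in s)) ss !inE eqxx.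
- by rewrite setin_rcons ss setD1K.
- apply/shelling_rcons; rewrite set0U ss; split => //.
    by rewrite !inE eqxx.
  exact: simpl_auto.
Qed.
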